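(* Let $\Omega\subseteq\mathbb{F}$ be a P-closed set with finite P-basis $\mathcal{B}$ and let $n=\#\mathcal{B}=\mathrm{Rk}(\Omega)$. For all $F,G\in\mathbb{F}[x;\sigma,\delta]_n$ and all $a\in\mathbb{F}^*=\mathbb{F}\setminus\{0\}$: (1) $\mathrm{wt}_\Omega(F)=0$ if and only if $E_\mathcal{B}(F)=0$, which holds if and only if $F=0$; (2) $\mathrm{wt}_\Omega(F+G)\le \mathrm{wt}_\Omega(F)+\mathrm{wt}_\Omega(G)$; (3) $\mathrm{wt}_\Omega(aF)=\mathrm{wt}_\Omega(F)$. Consequently the same three properties hold for $\mathrm{wt}_\mathcal{B}$ on $\mathbb{F}^\mathcal{B}$, and $\mathrm{d}_\mathcal{B}$ is a metric.
   Context: $\mathbb{F}$ is a division ring, $\sigma:\mathbb{F}\to\mathbb{F}$ a ring endomorphism and $\delta:\mathbb{F}\to\mathbb{F}$ a $\sigma$-derivation (additive, with $\delta(ab)=\sigma(a)\delta(b)+\delta(a)b$). The skew polynomial ring $\mathbb{F}[x;\sigma,\delta]$ is the left $\mathbb{F}$-vector space with basis $\{x^i\}_{i\ge0}$ and multiplication determined by $x^ix^j=x^{i+j}$ and $xa=\sigma(a)x+\delta(a)$ for $a\in\mathbb{F}$. $\mathbb{F}[x;\sigma,\delta]_n$ denotes the skew polynomials of degree $<n$. For $F\in\mathbb{F}[x;\sigma,\delta]$ and $a\in\mathbb{F}$, the evaluation $F(a)$ is the unique element of $\mathbb{F}$ such that $F=G(x-a)+F(a)$ for some $G\in\mathbb{F}[x;\sigma,\delta]$.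 For $\Omega\subseteq\mathbb{F}$, $\mathbb{F}^\Omega$ is the set of functions $\Omega\to\mathbb{F}$ and $E_\Omega(F)\in\mathbb{F}^\Omega$ is $a\mapsto F(a)$. For $A\subseteq\mathbb{F}[x;\sigma,\delta]$, $Z(A)=\{a\in\mathbb{F}: F(a)=0\ \forall F\in A\}$; for $\Omega\subseteq\mathbb{F}$, $I(\Omega)$ is the left ideal of skew polynomials vanishing on $\Omega$, and $F_\Omega$ is its unique monic generator of minimal degree. The P-closure of $\Omega$ is $\overline{\Omega}=Z(I(\Omega))$; $\Omega$ is P-closed if $\overline{\Omega}=\Omega$. A set $\Omega$ is P-independent if no $a\in\Omega$ lies in $\overline{\Omega\setminus\{a\}}$. A P-basis of a P-closed set $\Omega$ is a P-independent $\mathcal{B}\subseteq\Omega$ with $\overline{\mathcal{B}}=\Omega$. For finitely generated P-closed $\Omega$ all P-bases are finite with $\deg(F_\Omega)$ elements; this number is the rank $\mathrm{Rk}(\Omega)$. (Known fact: if $\mathcal{B}=\{b_1,\dots,b_n\}$ is a P-basis, then for any $a_1,\dots,a_n$ there is a unique $F$ of degree $<n$ with $F(b_i)=a_i$, so $E_\mathcal{B}:\mathbb{F}[x;\sigma,\delta]_n\to\mathbb{F}^\mathcal{B}$ is a left-linear isomorphism.) Skew weight: for $F\in\mathbb{F}[x;\sigma,\delta]_n$, $Z_\Omega(F)=Z(F)\cap\Omega$ (a P-closed set) and $\mathrm{wt}_\Omega(F)=n-\mathrm{Rk}(Z_\Omega(F))$; for $f\in\mathbb{F}^\mathcal{B}$,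 $\mathrm{wt}_\mathcal{B}(f)=\mathrm{wt}_\Omega(F)$ where $F\in\mathbb{F}[x;\sigma,\delta]_n$ is the unique polynomial with $E_\mathcal{B}(F)=f$; the skew metric is $\mathrm{d}_\mathcal{B}(f,g)=\mathrm{wt}_\mathcal{B}(f-g)$. *)

(* Defs.v *)
(* Skew polynomials F[x; s, d] over a division ring R are
   represented by their (left) coefficient sequences in {poly R}; the
   additive structure and left scaling of {poly R} coincide with those of
   the skew polynomial ring, and the skew product is defined below. *)
From HB Require Import structures.
From mathcomp Require Import all_boot all_order all_algebra.
From Stdlib Require Import ClassicalEpsilon.
Set Implicit Arguments. Unset Strict Implicit. Unset Printing Implicit Defensive.
Import GRing.Theory.
Local Open Scope ring_scope.

Section Skew.
Variables (R : unitRingType) (s : R -> R) (d : R -> R).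

(* left multiplication by x:  x * (sum c_j x^j) = sum (s(c_j) x^(j+1) + d(c_j) x^j) *)
Definition mulxl (p : {poly R}) : {poly R} := map_poly s p * 'X + map_poly d p.

Definition smul (F H : {poly R}) : {poly R} :=
  \sum_(i < size F) F`_i *: iter i mulxl H.

Definition ev (F : {poly R}) (a : R) : R :=
  epsilon (inhabits 0) (fun c => exists G, F = smul G ('X - a%:P) + c%:P).

Definition Zset (A : {poly R} -> Prop) : R -> Prop :=
  fun a => forall F, A F -> ev F a = 0.

Definition Iset (Om : R -> Prop) : {poly R} -> Prop :=
  fun F => forall a, Om a -> ev F a = 0.

Definition Pclosure (Om : R -> Prop) : R -> Prop := Zset (Iset Om).
Definition Pclosed (Om : R -> Prop) : Prop := forall a, Pclosure Om a <-> Om a.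
Definition Pindependent (Om : R -> Prop) : Prop :=
  forall a, Om a -> ~ Pclosure (fun b => Om b /\ b <> a) a.
Definition Pbasis (Om : R -> Prop) (B : seq R) : Prop :=
  uniq B /\ (forall b, b \in B -> Om b) /\ Pindependent (fun b => b \in B)
  /\ (forall a, Pclosure (fun b => b \in B) a <-> Om a).

Definition minpoly_deg (Om : R -> Prop) (r : nat) : Prop :=
  exists F, F \is monic /\ Iset Om F /\ size F = r.+1 /\
    forall G, G != 0 -> Iset Om G -> (r.+1 <= size G)%N.

Definition Rk (Om : R -> Prop) : nat := epsilon (inhabits 0%N) (minpoly_deg Om).

Definition ZOm (Om : R -> Prop) (F : {poly R}) : R -> Prop :=
  fun a => Om a /\ ev F a = 0.

Definition wtO (Om : R -> Prop) (F : {poly R}) : nat := (Rk Om - Rk (ZOm Om F))%N.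

(* E_B(F) in F^B, B listed as a sequence (coordinates indexed by position) *)
Definition EB (B : seq R) (F : {poly R}) : 'rV[R]_(size B) :=
  \row_(i < size B) ev F B`_i.

Definition interpB (B : seq R) (f : 'rV[R]_(size B)) : {poly R} :=
  epsilon (inhabits 0) (fun F : {poly R} => (size F <= size B)%N /\ EB B F = f).

Definition wtB (Om : R -> Prop) (B : seq R) (f : 'rV[R]_(size B)) : nat :=
  wtO Om (@interpB B f).

Definition dB (Om : R -> Prop) (B : seq R) (f g : 'rV[R]_(size B)) : nat :=
  @wtB Om B (f - g).

End Skew.
Arguments interpB {R} s d B f.
Arguments wtB {R} s d Om B f.
Arguments dB {R} s d Om B f g.

(* Main.v *)
Require Import Defs.
From HB Require Import structures.
From mathcomp Require Import all_boot all_order all_algebra.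
From Stdlib Require Import Classical ClassicalEpsilon Lia FunctionalExtensionality PropExtensionality.
From mathcomp Require Import zify.
Import GRing.Theory.
Local Open Scope ring_scope.

Section Skew.
Variable R : unitRingType.
Hypothesis Hdiv : forall x : R, x != 0 -> x \is a GRing.unit.
Variable s : {rmorphism R -> R}.
Variable d : R -> R.
Hypothesis d_add : forall a b : R, d (a + b) = d a + d b.
Hypothesis d_mul : forall a b : R, d (a * b) = s a * d b + d a * b.

Local Notation mulxl := (mulxl s d).
Local Notation smul := (smul s d).
Local Notation ev := (ev s d).

Lemma d0 : d 0 = 0.
Proof. have := d_add 0 0; rewrite addr0 => h. by apply: (addrI (d 0)); rewrite addr0 -h. Qed.

Lemma dN (a : R) : d (- a) = - d a.
Proof. by apply: (addrI (d a)); rewrite -d_add !subrr d0. Qed.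

Lemma d1 : d 1 = 0.
Proof.
have := d_mul 1 1; rewrite rmorph1 !mul1r mulr1 => h.
by apply: (addrI (d 1)); rewrite addr0 -h.
Qed.

Lemma mulVR {x : R} : x != 0 -> x^-1 * x = 1.
Proof. by move=> /Hdiv; apply: mulVr. Qed.
Lemma mulRV {x : R} : x != 0 -> x * x^-1 = 1.
Proof. by move=> /Hdiv; apply: mulrV. Qed.

Lemma mulR_eq0 {a b : R} : a * b = 0 -> a = 0 \/ b = 0.
Proof.
move=> h; case: (eqVneq a 0) => [->|ha]; [by left|right].
by rewrite -[b]mul1r -(mulVR ha) -mulrA h mulr0.
Qed.

Lemma mulR_neq0 {a b : R} : a != 0 -> b != 0 -> a * b != 0.
Proof. by move=> ha hb; apply/eqP => /mulR_eq0 [] /eqP; rewrite ?(negPf ha) ?(negPf hb). Qed.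

Lemma invR_neq0 {a : R} : a != 0 -> a^-1 != 0.
Proof. by move=> ha; apply/eqP => h; move: (mulRV ha); rewrite h mulr0 => /eqP; rewrite eq_sym oner_eq0. Qed.

Lemma s_neq0 {c : R} : c != 0 -> s c != 0.
Proof.
move=> hc; apply/eqP => h; have := congr1 s (mulRV hc).
by rewrite rmorphM h mul0r rmorph1 => /eqP; rewrite eq_sym oner_eq0.
Qed.

Lemma coef_mulxl p i :
  (mulxl p)`_i = (if i == 0%N then 0 else s p`_i.-1) + d p`_i.
Proof. by rewrite /Defs.mulxl coefD coefMX !coef_map_id0 ?rmorph0 ?d0. Qed.

Lemma mulxlD p q : mulxl (p + q) = mulxl p + mulxl q.
Proof.
apply/polyP => i; rewrite coefD !coef_mulxl !coefD d_add rmorphD.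
by case: (i == 0%N); [rewrite !add0r | rewrite addrACA].
Qed.

Lemma mulxl0 : mulxl 0 = 0.
Proof. by apply/polyP => i; rewrite coef_mulxl !coef0 rmorph0 d0 addr0; case: (i == 0%N). Qed.

Lemma mulxlN p : mulxl (- p) = - mulxl p.
Proof.
apply/polyP => i; rewrite coefN !coef_mulxl !coefN dN rmorphN.
by case: (i == 0%N); rewrite ?oppr0 ?add0r // opprD.
Qed.

Lemma mulxlB p q : mulxl (p - q) = mulxl p - mulxl q.
Proof. by rewrite mulxlD mulxlN. Qed.

Lemma mulxlZ c p : mulxl (c *: p) = s c *: mulxl p + d c *: p.
Proof.
apply/polyP => i; rewrite coef_mulxl [RHS]coefD (coefZ (s c)) (coefZ (d c)) coef_mulxl !(coefZ c) d_mul mulrDr rmorphM.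
by case: (i == 0%N); rewrite ?mulr0 ?add0r ?addrA.
Qed.

Lemma mulxl_sum (I : Type) (r : seq I) (P : pred I) (F : I -> {poly R}) :
  mulxl (\sum_(i <- r | P i) F i) = \sum_(i <- r | P i) mulxl (F i).
Proof. exact: (big_morph mulxl mulxlD mulxl0). Qed.

Lemma size_map_le (f : R -> R) p : (size (map_poly f p) <= size p)%N.
Proof. by rewrite /map_poly size_poly. Qed.

Lemma size_mulxl {p} : p != 0 -> size (mulxl p) = (size p).+1 /\ lead_coef (mulxl p) = s (lead_coef p).
Proof.
move=> p0.
have ls : s (lead_coef p) != 0 by apply: s_neq0; rewrite lead_coef_eq0.
have sm : size (map_poly s p) = size p by rewrite size_map_poly_id0.
have m0 : map_poly s p != 0 by rewrite -size_poly_gt0 sm size_poly_gt0.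
have h1 : size (map_poly s p * 'X) = (size p).+1 by rewrite size_mulX // sm.
have h2 : (size (map_poly d p) < size (map_poly s p * 'X)%R)%N by rewrite h1 ltnS size_map_le.
rewrite /Defs.mulxl size_polyDl // lead_coefDl // lead_coefMX lead_coef_map_id0 ?rmorph0 //.
Qed.

Lemma size_mulxl_le p : (size (mulxl p) <= (size p).+1)%N.
Proof. by case: (eqVneq p 0) => [->|/size_mulxl [->]//]; rewrite mulxl0 size_poly0. Qed.

Lemma monic_mulxl {p} : p \is monic -> mulxl p \is monic /\ size (mulxl p) = (size p).+1.
Proof.
move=> /monicP h; have p0 : p != 0 by rewrite -lead_coef_eq0 h oner_eq0.
have [h1 h2] := size_mulxl p0; split=> //; apply/monicP; by rewrite h2 h rmorph1.
Qed.

Lemma monic_iter {p} i : p \is monic -> iter i mulxl p \is monic /\ size (iter i mulxl p) = (size p + i)%N.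
Proof.
move=> hp; elim: i => [|i [m1 s1]]; first by rewrite addn0.
by have [m2 s2] := monic_mulxl m1; rewrite iterS s2 s1 addnS.
Qed.

Lemma size_iter_le p i : (size (iter i mulxl p) <= size p + i)%N.
Proof.
elim: i => [|i IH]; first by rewrite addn0.
by rewrite iterS addnS (leq_trans (size_mulxl_le _)).
Qed.

Lemma smulE {F : {poly R}} (H : {poly R}) {m : nat} : (size F <= m)%N ->
  smul F H = \sum_(i < m) F`_i *: iter i mulxl H.
Proof.
move=> hm; rewrite /Defs.smul (big_ord_widen m (fun i => F`_i *: iter i mulxl H) hm).
rewrite big_mkcond /=; apply: eq_bigr => i _.
by case: ltnP => // hi; rewrite nth_default // scale0r.
Qed.

Lemma smulD (F G H : {poly R}) : smul (F + G) H = smul F H + smul G H.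
Proof.
rewrite !(smulE _ (leq_maxl (size F) (size G))) (smulE _ (leq_maxr (size F) (size G))).
rewrite (smulE _ (size_polyD F G)) -big_split /=; apply: eq_bigr => i _.
by rewrite coefD scalerDl.
Qed.

Lemma smulZ (c : R) (F H : {poly R}) : smul (c *: F) H = c *: smul F H.
Proof.
rewrite !(smulE _ (leqnn (size F))) (smulE _ (size_scale_leq c F)) scaler_sumr.
by apply: eq_bigr => i _; rewrite coefZ scalerA.
Qed.

Lemma smul0 (H : {poly R}) : smul 0 H = 0.
Proof. by rewrite /Defs.smul size_poly0 big_ord0. Qed.

Lemma smulN (F H : {poly R}) : smul (- F) H = - smul F H.
Proof. by rewrite -scaleN1r smulZ scaleN1r. Qed.

Lemma smulB (F G H : {poly R}) : smul (F - G) H = smul F H - smul G H.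
Proof. by rewrite smulD smulN. Qed.

Lemma smulC (c : R) (H : {poly R}) : smul c%:P H = c *: H.
Proof.
by rewrite (smulE _ (size_polyC_leq1 c)) big_ord1 coefC /=.
Qed.

Lemma smulXn (k : nat) (H : {poly R}) : smul 'X^k H = iter k mulxl H.
Proof.
rewrite (smulE _ (leqnn _)) size_polyXn big_ord_recr /= coefXn eqxx scale1r.
rewrite big1 ?add0r // => i _; by rewrite coefXn (ltn_eqF (ltn_ord i)) scale0r.
Qed.

Lemma smul_sum (I : Type) (r : seq I) (P : pred I) (F : I -> {poly R}) (H : {poly R}) :
  smul (\sum_(i <- r | P i) F i) H = \sum_(i <- r | P i) smul (F i) H.
Proof. exact: (big_morph (fun F => smul F H) (fun F G => smulD F G H) (smul0 H)). Qed.

Lemma mulxl_smul (G H : {poly R}) : mulxl (smul G H) = smul (mulxl G) H.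
Proof.
rewrite (smulE _ (leqnSn (size G))) (smulE _ (size_mulxl_le G)) mulxl_sum.
rewrite (eq_bigr (fun i : 'I_(size G).+1 => s G`_i *: iter i.+1 mulxl H + d G`_i *: iter i mulxl H)); last first.
  by move=> i _; rewrite mulxlZ iterS.
rewrite big_split /=.
rewrite [RHS](eq_bigr (fun i : 'I_(size G).+1 => (if (i : nat) == 0%N then 0 else s G`_i.-1) *: iter i mulxl H + d G`_i *: iter i mulxl H)); last first.
  by move=> i _; rewrite coef_mulxl scalerDl.
rewrite [RHS]big_split /=; congr (_ + _).
rewrite big_ord_recr /= nth_default // rmorph0 scale0r addr0.
by rewrite [RHS]big_ord_recl /= scale0r add0r.
Qed.

Lemma sizeZ_monic {c : R} {p : {poly R}} : c != 0 -> p \is monic ->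
  size (c *: p) = size p /\ lead_coef (c *: p) = c.
Proof.
move=> c0 pm; have p0 : p != 0 by rewrite -lead_coef_eq0 (monicP pm) oner_eq0.
have e : (c *: p)`_(size p).-1 = c by rewrite (coefZ c) -/(lead_coef p) (monicP pm) mulr1.
have sz : size (c *: p) = size p.
  apply/eqP; rewrite eqn_leq size_scale_leq /= (polySpred p0).
  rewrite ltnNge; apply/negP => h; move: e; rewrite nth_default //.
  by move/eqP; rewrite eq_sym (negPf c0).
by split=> //; rewrite /lead_coef sz.
Qed.

Lemma smul_monic {G H : {poly R}} : G != 0 -> H \is monic ->
  size (smul G H) = (size G + size H).-1 /\ lead_coef (smul G H) = lead_coef G.
Proof.
move=> G0 Hm; have H0 : H != 0 by rewrite -lead_coef_eq0 (monicP Hm) oner_eq0.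
have hs := polySpred G0; set k := (size G).-1 in hs.
have lk : lead_coef G = G`_k by [].
rewrite (smulE H (leqnn _)) hs big_ord_recr /=.
have [mk sk] := monic_iter k Hm.
have Gk : G`_k != 0 by rewrite -lk lead_coef_eq0.
have [sz lz] := sizeZ_monic Gk mk.
have hH : (0 < size H)%N by rewrite size_poly_gt0.
have small : (size (\sum_(i < k) G`_i *: iter i mulxl H)%R < size (G`_k *: iter k mulxl H))%N.
  rewrite sz sk; apply: (big_ind (fun p : {poly R} => size p < size H + k)%N).
  - by rewrite size_poly0 ltn_addr.
  - by move=> x y hx hy; rewrite (leq_ltn_trans (size_polyD _ _)) // gtn_max hx hy.
  - move=> i _; rewrite (leq_ltn_trans (size_scale_leq _ _)) //.
    by rewrite (leq_ltn_trans (size_iter_le _ _)) // ltn_add2l.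
rewrite addrC size_polyDl // lead_coefDl // sz lz sk lk; split=> //.
exact: addnC.
Qed.


Lemma addr_swap (V : zmodType) (A B c c' : V) : A + c = B + c' -> A - B = c' - c.
Proof. move=> h. by rewrite -[A](addrK c) h addrAC [B + c' - B]addrAC subrr add0r. Qed.

Lemma size_sub_lead {p q : {poly R}} : p != 0 -> size p = size q ->
  lead_coef p = lead_coef q -> (size (p - q)%R < size p)%N.
Proof.
move=> p0 sq lq; rewrite (polySpred p0) ltnS; apply/leq_sizeP => j hj.
rewrite coefB; case: (eqVneq j (size p).-1) => [->|ne].
  by rewrite -/(lead_coef p) lq /lead_coef sq subrr.
have hj' : (size p <= j)%N by rewrite (polySpred p0) ltn_neqAle eq_sym ne hj.
by rewrite !nth_default ?subrr // -sq.
Qed.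

Lemma smul_Xa_size {G : {poly R}} (a : R) : G != 0 -> size (smul G ('X - a%:P)) = (size G).+1.
Proof. by move=> G0; have [-> _] := smul_monic G0 (monicXsubC a); rewrite size_XsubC addn2. Qed.

Lemma ev_exists (F : {poly R}) (a : R) : exists G c, F = smul G ('X - a%:P) + c%:P.
Proof.
move: {2}(size F) (leqnn (size F)) => m; elim: m F => [|m IH] F hF.
  exists 0, 0; rewrite smul0 add0r; by apply/eqP; rewrite -size_poly_leq0.
case: (leqP (size F) 1) => h1.
  by exists 0, F`_0; rewrite smul0 add0r -size1_polyC.
have F0 : F != 0 by rewrite -size_poly_gt0 (ltn_trans _ h1).
have lF : lead_coef F != 0 by rewrite lead_coef_eq0.
set k := (size F).-2.
have [mk sk] := monic_iter k (monicXsubC a).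
have [sz lz] := sizeZ_monic lF mk.
have eF : size F = (size ('X - a%:P)%R + k)%N.
  by rewrite size_XsubC /k addnC addn2; case: (size F) h1 => [|[|n]].
have hs := size_sub_lead F0 (etrans eF (esym (etrans sz sk))) (esym lz).
set Q := lead_coef F *: iter k mulxl ('X - a%:P).
have hm : (size (F - Q)%R <= m)%N by rewrite -ltnS (leq_trans hs hF).
have [G [c hG]] := IH _ hm.
exists (G + lead_coef F *: 'X^k), c.
by rewrite smulD smulZ smulXn -addrA [_ + c%:P]addrC addrA -hG subrK.
Qed.

Lemma ev_uniq (G G' : {poly R}) (a c c' : R) :
  smul G ('X - a%:P) + c%:P = smul G' ('X - a%:P) + c'%:P -> c = c'.
Proof.
move=> h.
have h2 : smul (G - G') ('X - a%:P) = (c' - c)%:P.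
  by rewrite smulB polyCB; apply: addr_swap.
case: (eqVneq (G - G') 0) => [e|ne].
  by move: h2; rewrite e smul0 => /esym/eqP; rewrite polyC_eq0 subr_eq0 => /eqP.
have := size_polyC_leq1 (c' - c); rewrite -h2 smul_Xa_size //.
by rewrite ltnS leqNgt size_poly_gt0 ne.
Qed.

Lemma evP (F : {poly R}) (a : R) : exists G, F = smul G ('X - a%:P) + (ev F a)%:P.
Proof.
rewrite /Defs.ev; apply: (epsilon_spec (inhabits 0) (fun c => exists G, F = smul G ('X - a%:P) + c%:P)).
by have [G [c h]] := ev_exists F a; exists c, G.
Qed.

Lemma ev_eq (F G : {poly R}) (a c : R) : F = smul G ('X - a%:P) + c%:P -> ev F a = c.
Proof. by move=> h; have [G' h'] := evP F a; apply: (ev_uniq G' G a); rewrite -h' -h. Qed.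

Lemma evD (F1 F2 : {poly R}) (a : R) : ev (F1 + F2) a = ev F1 a + ev F2 a.
Proof.
have [G1 h1] := evP F1 a; have [G2 h2] := evP F2 a.
apply: (ev_eq _ (G1 + G2)); by rewrite smulD polyCD {1}h1 {1}h2 addrACA.
Qed.

Lemma evZ (c : R) (F : {poly R}) (a : R) : ev (c *: F) a = c * ev F a.
Proof.
have [G h] := evP F a.
by apply: (ev_eq _ (c *: G)); rewrite smulZ -scale_polyC -scalerDr -h.
Qed.

Lemma evC (c a : R) : ev c%:P a = c.
Proof. by apply: (ev_eq _ (0)); rewrite smul0 add0r. Qed.

Lemma ev0 (a : R) : ev 0 a = 0.
Proof. by rewrite -(evC 0 a). Qed.

Lemma evN (F : {poly R}) (a : R) : ev (- F) a = - ev F a.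
Proof. by rewrite -scaleN1r evZ mulN1r. Qed.

Lemma evB (F1 F2 : {poly R}) (a : R) : ev (F1 - F2) a = ev F1 a - ev F2 a.
Proof. by rewrite evD evN. Qed.

Lemma ev_sum (I : Type) (r : seq I) (P : pred I) (F : I -> {poly R}) (a : R) :
  ev (\sum_(i <- r | P i) F i) a = \sum_(i <- r | P i) ev (F i) a.
Proof. exact: (big_morph (fun F => ev F a) (fun F G => evD F G a) (ev0 a)). Qed.

Lemma mulxlC (e a : R) : mulxl e%:P = s e *: ('X - a%:P) + (s e * a + d e)%:P.
Proof.
apply/polyP => i; rewrite coef_mulxl [RHS]coefD (coefZ (s e)) coefB coefX !coefC.
case: i => [|[|i]] /=.
- by rewrite add0r sub0r mulrN addrA addNr add0r.
- by rewrite d0 addr0 subr0 mulr1 addr0.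
- by rewrite rmorph0 d0 addr0 subr0 mulr0 addr0.
Qed.

Lemma ev_mulxl (F : {poly R}) (a : R) : ev (mulxl F) a = s (ev F a) * a + d (ev F a).
Proof.
have [G h] := evP F a.
apply: (ev_eq _ (mulxl G + (s (ev F a))%:P)).
by rewrite {1}h mulxlD mulxl_smul (mulxlC _ a) smulD smulC addrA.
Qed.

Definition lideal (J : {poly R} -> Prop) :=
  [/\ J 0, (forall p q, J p -> J q -> J (p + q)),
      (forall c p, J p -> J (c *: p)) & (forall p, J p -> J (mulxl p))].

Lemma lidealB J p q : lideal J -> J p -> J q -> J (p - q).
Proof. by rewrite /lideal => -[_ hD hZ _] hp hq; apply: hD => //; rewrite -scaleN1r; apply: hZ. Qed.

Lemma lideal_sum J (I : Type) (r : seq I) (P : pred I) (F : I -> {poly R}) :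
  lideal J -> (forall i, P i -> J (F i)) -> J (\sum_(i <- r | P i) F i).
Proof. by rewrite /lideal => -[h0 hD _ _] hF; apply: (big_ind J). Qed.

Lemma lideal_iter J p i : lideal J -> J p -> J (iter i mulxl p).
Proof. by rewrite /lideal => -[_ _ _ hx] hp; elim: i => //= i IH; apply: hx. Qed.

Lemma lideal_smul J G H : lideal J -> J H -> J (smul G H).
Proof.
move=> hJ hH; rewrite /Defs.smul; apply: lideal_sum => // i _.
by move: (hJ); rewrite /lideal => -[_ _ hZ _]; apply: hZ; apply: lideal_iter.
Qed.

Lemma Iset_lideal S : lideal (Iset s d S).
Proof.
split.
- by move=> a _; rewrite ev0.
- by move=> p q hp hq a ha; rewrite evD hp // hq // addr0.
- by move=> c p hp a ha; rewrite evZ hp // mulr0.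
- by move=> p hp a ha; rewrite ev_mulxl hp // rmorph0 d0 mul0r addr0.
Qed.


Definition asb (P : Prop) : bool := if excluded_middle_informative P then true else false.
Lemma asbP (P : Prop) : reflect P (asb P).
Proof. by rewrite /asb; case: excluded_middle_informative => h; constructor. Qed.

Fixpoint inspan (ps : seq {poly R}) (w : {poly R}) : Prop :=
  match ps with
  | [::] => w = 0
  | p :: ps' => exists c u, inspan ps' u /\ w = c *: p + u
  end.

Lemma inspan0 ps : inspan ps 0.
Proof. by elim: ps => //= p ps IH; exists 0, 0; rewrite scale0r addr0. Qed.

Lemma inspanD ps u v : inspan ps u -> inspan ps v -> inspan ps (u + v).
Proof.
elim: ps u v => [|p ps IH] u v /=; first by move=> -> ->; rewrite addr0.
move=> [c1 [u1 [h1 ->]]] [c2 [u2 [h2 ->]]]; exists (c1 + c2), (u1 + u2).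
by split; [apply: IH | rewrite scalerDl addrACA].
Qed.

Lemma inspanZ ps c u : inspan ps u -> inspan ps (c *: u).
Proof.
elim: ps u => [|p ps IH] u /=; first by move=> ->; rewrite scaler0.
move=> [c1 [u1 [h1 ->]]]; exists (c * c1), (c *: u1).
by split; [apply: IH | rewrite scalerDr scalerA].
Qed.

Lemma inspanB ps u v : inspan ps u -> inspan ps v -> inspan ps (u - v).
Proof. by move=> hu hv; apply: inspanD => //; rewrite -scaleN1r; apply: inspanZ. Qed.

Lemma inspan_mem ps p : p \in ps -> inspan ps p.
Proof.
elim: ps => [|q ps IH] //=; rewrite in_cons => /orP [/eqP ->|h].
  by exists 1, 0; rewrite scale1r addr0; split => //; apply: inspan0.
by exists 0, p; rewrite scale0r add0r; split => //; apply: IH.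
Qed.

Lemma inspan_catl ps qs u : inspan ps u -> inspan (ps ++ qs) u.
Proof.
elim: ps u => [|p ps IH] u /=.
  by move=> ->; apply: inspan0.
by move=> [c [v [h ->]]]; exists c, v; split => //; apply: IH.
Qed.

Lemma inspan_catr ps qs u : inspan qs u -> inspan (ps ++ qs) u.
Proof.
elim: ps u => [|p ps IH] u //= h.
by exists 0, u; rewrite scale0r add0r; split => //; apply: IH.
Qed.

Definition degs (f : {poly R} -> {poly R}) (ps : seq {poly R}) (N : nat) : {set 'I_N} :=
  [set k : 'I_N | asb (exists w, inspan ps w /\ size (f w) = (k : nat).+1)].

Lemma card_degs (f : {poly R} -> {poly R})
  (hf : forall c u v, f (u - c *: v) = f u - c *: f v) N ps :
  (#|degs f ps N| <= size ps)%N.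
Proof.
have f0 : f 0 = 0 by move: (hf 1 0 0); rewrite !scale1r !subrr.
elim: ps => [|p ps IH].
  rewrite leqn0 cards_eq0; apply/eqP/setP => k; rewrite !inE.
  by apply/asbP => -[w [/= -> ]]; rewrite f0 size_poly0.
set A := degs f (p :: ps) N; set B := degs f ps N.
have key : forall k1 k2 : 'I_N, k1 \in A :\: B -> k2 \in A :\: B -> ~ (k2 < k1)%N.
  move=> k1 k2; rewrite !inE => /andP [/asbP nB1 /asbP [w1 [s1 e1]]] /andP [/asbP nB2 /asbP [w2 [s2 e2]]] lt.
  move: s1 s2 => /= [c1 [u1 [h1 d1']]] [c2 [u2 [h2 d2']]].
  case: (eqVneq c2 0) => [c20|c2n].
    by apply: nB2; exists w2; split => //; rewrite d2' c20 scale0r add0r.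
  apply: nB1; exists (w1 - (c1 * c2^-1) *: w2); split.
    have -> : w1 - (c1 * c2^-1) *: w2 = u1 - (c1 * c2^-1) *: u2.
      rewrite d1' d2' scalerDr scalerA -mulrA mulVR // mulr1 opprD addrA.
      by rewrite [c1 *: p + u1]addrC addrK.
    by apply: inspanB => //; apply: inspanZ.
  rewrite hf size_polyDl ?e1 // size_polyN (leq_ltn_trans (size_scale_leq _ _)) //.
  by rewrite e2 ltnS.
have le1 : (#|A :\: B| <= 1)%N.
  apply/card_le1_eqP => k1 k2 h1 h2; apply: val_inj; apply/eqP; rewrite eqn_leq.
  by apply/andP; split; rewrite leqNgt; apply/negP; [apply: key | apply: key].
rewrite -(cardsID B A) /=.
apply: (leq_trans (leq_add (subset_leq_card (subsetIr A B)) le1)).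
by rewrite addn1 ltnS.
Qed.

Lemma degs_lb (f : {poly R} -> {poly R}) N ps k0 m :
  (k0 + m <= N)%N ->
  (forall j, (j < m)%N -> exists w, inspan ps w /\ size (f w) = (k0 + j).+1) ->
  (m <= #|degs f ps N|)%N.
Proof.
move=> hm hw.
have gP : forall j : 'I_m, (k0 + j < N)%N by move=> j; rewrite (leq_trans _ hm) // ltn_add2l.
pose g := fun j : 'I_m => Ordinal (gP j).
have inj : injective g by move=> a b /(congr1 val) /= /addnI /val_inj.
rewrite -{1}(card_ord m) -cardsT -(card_imset _ inj); apply: subset_leq_card.
apply/subsetP => k /imsetP [j _ ->]; rewrite inE; apply/asbP; exact: hw (ltn_ord j).
Qed.

Fixpoint mons (m : nat) : seq {poly R} :=
  if m is m'.+1 then 'X^m' :: mons m' else [::].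

Lemma size_mons m : size (mons m) = m.
Proof. by elim: m => //= m ->. Qed.

Lemma inspan_mons m (P : {poly R}) : (size P <= m)%N -> inspan (mons m) P.
Proof.
elim: m P => [|m IH] P hP /=; first by apply/eqP; rewrite -size_poly_leq0.
exists P`_m, (P - P`_m *: 'X^m); split; last by rewrite addrC subrK.
apply: IH; apply/leq_sizeP => j hj; rewrite coefB (coefZ (P`_m)) coefXn.
case: (eqVneq j m) => [->|ne]; first by rewrite mulr1 subrr.
have hj' : (m < j)%N by rewrite ltn_neqAle eq_sym ne hj.
by rewrite mulr0 subr0 nth_default // (leq_trans hP hj').
Qed.


Lemma normalize {p : {poly R}} : p != 0 ->
  ((lead_coef p)^-1 *: p) \is monic /\ size ((lead_coef p)^-1 *: p) = size p.
Proof.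
move=> p0; have l0 : lead_coef p != 0 by rewrite lead_coef_eq0.
have e : ((lead_coef p)^-1 *: p)`_(size p).-1 = 1 by rewrite (coefZ _ p) -/(lead_coef p) mulVR.
have sz : size ((lead_coef p)^-1 *: p) = size p.
  apply/eqP; rewrite eqn_leq size_scale_leq /= (polySpred p0).
  rewrite ltnNge; apply/negP => h; move: e; rewrite nth_default //.
  by move/eqP; rewrite eq_sym oner_eq0.
by split=> //; apply/monicP; rewrite /lead_coef sz.
Qed.

Lemma Red {J : {poly R} -> Prop} {M : {poly R}} {m : nat} :
  lideal J -> M \is monic -> size M = m.+1 -> J M ->
  forall Q : {poly R}, exists Q' : {poly R}, (size Q' <= m)%N /\ J (Q - Q').
Proof.
move=> hJ Mm sM JM Q.
move: {2}(size Q) (leqnn (size Q)) => k; elim: k Q => [|k IH] Q hQ.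
  by exists Q; split; [apply: (leq_trans hQ) | rewrite subrr; case: hJ].
case: (leqP (size Q) m) => hm.
  by exists Q; split => //; rewrite subrr; case: hJ.
have Q0 : Q != 0 by rewrite -size_poly_gt0 (leq_ltn_trans _ hm).
have lQ : lead_coef Q != 0 by rewrite lead_coef_eq0.
set j := (size Q - m.+1)%N.
have [mj sj] := monic_iter j Mm.
have [sz lz] := sizeZ_monic lQ mj.
have eQ : size Q = (size M + j)%N by rewrite sM /j subnKC.
have hs := size_sub_lead Q0 (etrans eQ (esym (etrans sz sj))) (esym lz).
set T := lead_coef Q *: iter j mulxl M.
have hk : (size (Q - T)%R <= k)%N by rewrite -ltnS (leq_trans hs hQ).
have [Q' [s' h']] := IH _ hk.
exists Q'; split => //.
have -> : Q - Q' = (Q - T - Q') + T by rewrite addrAC subrK.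
case: (hJ) => _ hD hZ _; apply: hD => //; apply: hZ; exact: lideal_iter.
Qed.

Lemma lideal_all (J : {poly R} -> Prop) : lideal J -> J 1 -> forall P, J P.
Proof.
move=> hJ h1 P.
have hX : forall i, J 'X^i.
  elim=> [|i IH]; first by rewrite expr0.
  have -> : 'X^(i.+1) = mulxl 'X^i.
    apply/polyP => j; rewrite coef_mulxl !coefXn.
    case: j => [|j] /=; first by rewrite add0r; case: (0 == i)%N; rewrite ?d1 ?d0.
    by rewrite eqSS rmorph_nat; case: (j.+1 == i); rewrite /= ?mulr1n ?mulr0n ?d1 ?d0 addr0.
  by case: hJ => _ _ _ hx; apply: hx.
rewrite -(coefK P) poly_def; apply: lideal_sum => // i _.
by case: hJ => _ _ hZ _; apply: hZ.
Qed.


Variable Om : R -> Prop.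
Variable B : seq R.
Hypothesis HOm : Pclosed s d Om.
Hypothesis HB : Pbasis s d Om B.
Local Notation n := (size B).
Local Notation IS := (Iset s d).
Local Notation IB := (Iset s d (fun b => b \in B)).

Lemma uniqB : uniq B. Proof. by case: HB. Qed.
Lemma B_Om b : b \in B -> Om b. Proof. by case: HB => _ [h _]; apply: h. Qed.

Lemma IB_IOm {F} : IB F -> IS Om F.
Proof. move=> h a /(proj2 (proj2 (proj2 (proj2 HB)) a)); exact. Qed.

Lemma IOm_IB {F} : IS Om F -> IB F.
Proof. by move=> h b hb; apply: h; apply: B_Om. Qed.

Lemma IB_nth F : IB F <-> forall k, (k < n)%N -> ev F B`_k = 0.
Proof.
split; first by move=> h k hk; apply: h; apply: mem_nth.
move=> h b hb; rewrite -(nth_index 0 hb); apply: h; by rewrite index_mem.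
Qed.

Lemma Om_of a : (forall F, IS Om F -> ev F a = 0) -> Om a.
Proof. by move=> h; apply/(HOm a). Qed.

Lemma IS_lid S : lideal (IS S). Proof. exact: Iset_lideal. Qed.

Lemma IS_Z S c F : IS S F -> IS S (c *: F).
Proof. by case: (IS_lid S) => _ _ hZ _; apply: hZ. Qed.
Lemma IS_D S F G : IS S F -> IS S G -> IS S (F + G).
Proof. by case: (IS_lid S) => _ hD _ _; apply: hD. Qed.
Lemma IS_B S F G : IS S F -> IS S G -> IS S (F - G).
Proof. by move=> hF hG; apply: (lidealB _ _ _ (IS_lid S) hF hG). Qed.

Lemma exM (l : seq R) : exists M, M \is monic /\ (size M <= (size l).+1)%N /\
  forall b, b \in l -> ev M b = 0.
Proof.
elim: l => [|b l [M [Mm [sM hM]]]].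
  by exists 1; rewrite monic1 size_poly1; split.
case: (eqVneq (ev M b) 0) => hb.
  exists M; split => //; split; first by rewrite (leq_trans sM).
  by move=> a; rewrite in_cons => /orP [/eqP ->|/hM].
set m := ev M b; set c := (s m * b + d m) * m^-1.
exists (mulxl M - c *: M).
have [mm sm] := monic_mulxl Mm.
have lt : (size (- (c *: M)) < size (mulxl M))%N by rewrite size_polyN sm ltnS size_scale_leq.
split; first by apply/monicP; rewrite lead_coefDl // (monicP mm).
split; first by rewrite size_polyDl // sm /= ltnS.
move=> a; rewrite in_cons => /orP [/eqP ->|ha].
  by rewrite evB evZ ev_mulxl -/m -mulrA mulVR // mulr1 subrr.
by rewrite evB evZ ev_mulxl hM // rmorph0 d0 mul0r addr0 mulr0 subrr.
Qed.

Lemma lagrange {k} : (k < n)%N -> exists Q, forall j, (j < n)%N -> ev Q B`_j = (j == k)%:R.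
Proof.
move=> hk; have hkB : B`_k \in B := mem_nth 0 hk.
have [_ [_ [hind _]]] := HB.
have nh := hind _ hkB.
have [F [hF hFa]] : exists F, IS (fun b => b \in B /\ b <> B`_k) F /\ ev F B`_k != 0.
  apply: NNPP => hn; apply: nh => F hF.
  apply/eqP; apply: contraT => hne; exfalso; apply: hn; exists F; split => //.
exists ((ev F B`_k)^-1 *: F) => j hj; rewrite evZ.
case: (eqVneq j k) => [->|ne]; first by rewrite mulVR // eqxx.
rewrite (hF B`_j) ?mulr0 ?(negPf ne) //; split; first exact: mem_nth.
by apply/eqP; rewrite nth_uniq // uniqB.
Qed.

Lemma IB_small {F} : IB F -> (size F <= n)%N -> F = 0.
Proof.
move=> hF hs; apply/eqP; apply: contraT => F0.
have [Mm sM] := normalize F0.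
set M := _ *: F in Mm sM.
have JM : IB M by apply: IS_Z.
have sM' := etrans sM (polySpred F0); set m := (size F).-1 in sM'.
have hm : (m < n)%N by rewrite -ltnS -(polySpred F0).
have hRem : forall k, (k < n)%N -> exists w : {poly R}, (size w <= m)%N /\
    forall j, (j < n)%N -> ev w B`_j = (j == k)%:R.
  move=> k hk; have [Q hQ] := lagrange hk.
  have [w [sw hw]] := Red (IS_lid _) Mm sM' JM Q.
  exists w; split => // j hj; rewrite -hQ //.
  by apply/eqP; rewrite eq_sym -subr_eq0 -evB; apply/eqP; apply: hw; apply: mem_nth.
pose f := fun P : {poly R} => \poly_(i < n) ev P B`_i.
have hf : forall c u v, f (u - c *: v) = f u - c *: f v.
  move=> c u v; apply/polyP => i; rewrite coefB (coefZ c) !coef_poly.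
  by case: ifP => _; rewrite ?evB ?evZ // mulr0 subr0.
have := card_degs _ hf n (mons m); rewrite size_mons => h1.
have : (n <= #|degs f (mons m) n|)%N.
  apply: (degs_lb f n (mons m) 0) => // j hj.
  have [w [sw hw]] := hRem j hj.
  exists w; split; first exact: inspan_mons.
  have -> : f w = 'X^j.
    apply/polyP => i; rewrite coef_poly coefXn.
    case: ifP => hi; first by rewrite hw.
    by case: eqP => // ei; move: hi; rewrite ei hj.
  by rewrite size_polyXn.
by move=> h2; move: (leq_trans h2 h1); rewrite leqNgt hm.
Qed.


Lemma subsub (V : zmodType) (x y : V) : x - (x - y) = y.
Proof. by rewrite opprB addrC subrK. Qed.

Lemma MB_ex : exists MB, MB \is monic /\ size MB = n.+1 /\ IB MB.
Proof.
have [M [Mm [sM hM]]] := exM B.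
have M0 : M != 0 by rewrite -lead_coef_eq0 (monicP Mm) oner_eq0.
exists M; split => //; split => //.
apply/eqP; rewrite eqn_leq sM /= ltnNge; apply/negP => h.
by move: M0; rewrite (IB_small hM h) eqxx.
Qed.

Lemma Lfam : exists L : 'I_n -> {poly R},
  forall k : 'I_n, forall j, (j < n)%N -> ev (L k) B`_j = (j == k)%:R.
Proof.
have h : forall k : 'I_n, exists Q : {poly R}, forall j, (j < n)%N -> ev Q B`_j = (j == k)%:R.
  by move=> k; exact: lagrange (ltn_ord k).
exact: fin_all_exists h.
Qed.

Lemma sum_delta (v : nat -> R) {j} : (j < n)%N ->
  \sum_(k < n) v k * (j == k)%:R = v j.
Proof.
move=> hj; rewrite (bigD1 (Ordinal hj)) //= eqxx mulr1 big1 ?addr0 // => k hk.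
case: eqP => [e|_]; last by rewrite mulr0.
by move: hk; rewrite -val_eqE /= e eqxx.
Qed.

Lemma interp_ex (v : nat -> R) : exists P : {poly R}, (size P <= n)%N /\ forall j, (j < n)%N -> ev P B`_j = v j.
Proof.
have [L hL] := Lfam; have [MB [Mm [sM JM]]] := MB_ex.
set P0 := \sum_(k < n) v k *: L k.
have hP0 : forall j, (j < n)%N -> ev P0 B`_j = v j.
  move=> j hj; rewrite ev_sum -(sum_delta v hj); apply: eq_bigr => k _; by rewrite evZ hL.
have [P [sP hP]] := Red (IS_lid _) Mm sM JM P0.
exists P; split => // j hj; rewrite -hP0 //.
by apply/eqP; rewrite eq_sym -subr_eq0 -evB; apply/eqP; apply: hP; apply: mem_nth.
Qed.

Lemma expand {L : 'I_n -> {poly R}}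
  (hL : forall k : 'I_n, forall j, (j < n)%N -> ev (L k) B`_j = (j == k)%:R) Q :
  IS Om (Q - \sum_(k < n) ev Q B`_k *: L k).
Proof.
apply: IB_IOm; apply/IB_nth => j hj; rewrite evB ev_sum.
rewrite (eq_bigr (fun k : 'I_n => ev Q B`_k * (j == k)%:R)); last by move=> k _; rewrite evZ hL.
by rewrite (sum_delta (fun k => ev Q B`_k) hj) subrr.
Qed.

Lemma minpoly_uniq S r1 r2 : minpoly_deg s d S r1 -> minpoly_deg s d S r2 -> r1 = r2.
Proof.
move=> [F1 [m1 [i1 [s1 h1]]]] [F2 [m2 [i2 [s2 h2]]]].
have F10 : F1 != 0 by rewrite -lead_coef_eq0 (monicP m1) oner_eq0.
have F20 : F2 != 0 by rewrite -lead_coef_eq0 (monicP m2) oner_eq0.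
have := h2 _ F10 i1; have := h1 _ F20 i2; rewrite s1 s2 !ltnS => a b.
by apply/eqP; rewrite eqn_leq a b.
Qed.

Lemma Rk_eq S r : minpoly_deg s d S r -> Rk s d S = r.
Proof.
move=> h; apply: (minpoly_uniq S (Rk s d S) r _ h).
exact: (epsilon_spec (inhabits 0%N) (minpoly_deg s d S) (ex_intro _ r h)).
Qed.

Lemma minpoly_ex S : (forall a, S a -> Om a) -> exists r, (r <= n)%N /\ minpoly_deg s d S r.
Proof.
move=> hS.
have [MB [Mm [sM JM]]] := MB_ex.
have MB0 : MB != 0 by rewrite -lead_coef_eq0 (monicP Mm) oner_eq0.
have JS : IS S MB by move=> a ha; apply: (IB_IOm JM); apply: hS.
suff : forall k, (exists G, G != 0 /\ IS S G /\ (size G <= k)%N) ->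
    exists r, (r.+1 <= k)%N /\ minpoly_deg s d S r.
  move=> /(_ n.+1) []; first by exists MB; rewrite sM.
  by move=> r [hr hm]; exists r.
elim => [|k IH] [G [G0 [JG sG]]].
  by move: G0; rewrite -size_poly_eq0; move: sG; rewrite leqn0 => ->.
case: (classic (exists G', G' != 0 /\ IS S G' /\ (size G' <= k)%N)) => [h|h].
  by have [r [hr hm]] := IH h; exists r; split => //; apply: leqW.
have [Mn sMn] := normalize G0.
exists (size G).-1; split; first by rewrite -(polySpred G0).
exists ((lead_coef G)^-1 *: G); split => //; split; first exact: IS_Z.
split; first by rewrite sMn (polySpred G0).
move=> G'' G''0 JG''; rewrite -(polySpred G0).
apply: (leq_trans sG); rewrite leqNgt ltnS; apply/negP => hle; apply: h.
by exists G''.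
Qed.

Lemma minpoly_Om : minpoly_deg s d Om n.
Proof.
have [MB [Mm [sM JM]]] := MB_ex.
exists MB; split => //; split; first exact: IB_IOm.
split => // G G0 JG; rewrite ltnNge; apply/negP => h.
by move: G0; rewrite (IB_small (IOm_IB JG) h) eqxx.
Qed.

Lemma Rk_Om : Rk s d Om = n.
Proof. exact: Rk_eq minpoly_Om. Qed.

Lemma mkseq_inspan (f : nat -> {poly R}) m j : (j < m)%N -> inspan (mkseq f m) (f j).
Proof. by move=> hj; apply: inspan_mem; apply/mapP; exists j => //; rewrite mem_iota. Qed.

Lemma KS_span S r M : M \is monic -> IS S M -> size M = r.+1 ->
  (forall G, G != 0 -> IS S G -> (r.+1 <= size G)%N) ->
  forall P, IS S P -> (size P <= n)%N -> inspan (mkseq (fun j => iter j mulxl M) (n - r)) P.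
Proof.
move=> Mm JM sM hmin P.
move: {2}(size P) (leqnn (size P)) => k; elim: k P => [|k IH] P hP JP hn.
  by move: hP; rewrite leqn0 size_poly_eq0 => /eqP ->; apply: inspan0.
case: (eqVneq P 0) => [->|P0]; first exact: inspan0.
have hr := hmin _ P0 JP.
have lP : lead_coef P != 0 by rewrite lead_coef_eq0.
set j := (size P - r.+1)%N.
have [mj sj] := monic_iter j Mm.
have [sz lz] := sizeZ_monic lP mj.
have eP : size P = (size M + j)%N by rewrite sM /j subnKC.
have hs := size_sub_lead P0 (etrans eP (esym (etrans sz sj))) (esym lz).
set T := lead_coef P *: iter j mulxl M.
have JT : IS S T by apply: IS_Z; apply: (lideal_iter _ _ _ (IS_lid S) JM).
have -> : P = (P - T) + T by rewrite subrK.
apply: inspanD.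
  apply: IH; [by rewrite -ltnS (leq_trans hs hP) | exact: IS_B | ].
  exact: (leq_trans (ltnW hs) hn).
apply: inspanZ; apply: mkseq_inspan.
by rewrite /j; move: hr hn; lia.
Qed.


(* ---------- Theorem C : left ideals containing I(Om) are closed ---------- *)
Section ThmC.
Variable L : 'I_n -> {poly R}.
Hypothesis hL : forall k : 'I_n, forall j, (j < n)%N -> ev (L k) B`_j = (j == k)%:R.

Lemma caseB (P : {poly R}) (J : {poly R} -> Prop) :
  lideal J -> (forall F, IS Om F -> J F) -> ~ J P ->
  (forall i, ~ J (L i) -> exists G c, J G /\ P = G + c *: L i) ->
  exists a, Om a /\ (forall G, J G -> ev G a = 0) /\ ev P a != 0.
Proof.
move=> hJ hOm nP hyp.
have [hJ0 hJD hJZ hJx] := hJ.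
have JB : forall p q, J p -> J q -> J (p - q) := fun p q => lidealB J p q hJ.
have exp : forall Q, J (Q - \sum_(k < n) ev Q B`_k *: L k) := fun Q => hOm _ (expand hL Q).
have [i0 ni0] : exists i0, ~ J (L i0).
  apply: NNPP => h; apply: nP.
  have -> : P = (P - \sum_(k < n) ev P B`_k *: L k) + \sum_(k < n) ev P B`_k *: L k by rewrite subrK.
  apply: hJD; first exact: exp.
  apply: lideal_sum => // k _; apply: hJZ; apply: NNPP => hk; apply: h; by exists k.
have [G0 [c0 [JG0 eP0]]] := hyp i0 ni0.
have he : forall i : 'I_n, exists e, J (L i - e *: L i0).
  move=> i; case: (classic (J (L i))) => hi.
    by exists 0; rewrite scale0r subr0.
  have [Gi [ci [JGi ePi]]] := hyp i hi.
  have ci0 : ci != 0.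
    by apply/eqP => ci0; apply: nP; rewrite ePi ci0 scale0r addr0.
  exists (ci^-1 * c0).
  have e1 : G0 - Gi = ci *: L i - c0 *: L i0 by apply: addr_swap; rewrite -eP0 -ePi.
  have -> : L i - (ci^-1 * c0) *: L i0 = ci^-1 *: (G0 - Gi).
    by rewrite e1 scalerBr !scalerA mulVR // scale1r.
  by apply: hJZ; apply: JB.
have [e he'] := fin_all_exists he.
have congr : forall Q, J (Q - (\sum_(k < n) ev Q B`_k * e k) *: L i0).
  move=> Q.
  have -> : Q - (\sum_(k < n) ev Q B`_k * e k) *: L i0 =
     (Q - \sum_(k < n) ev Q B`_k *: L k) + \sum_(k < n) ev Q B`_k *: (L k - e k *: L i0).
    rewrite [X in _ = _ + X](eq_bigr (fun k : 'I_n => ev Q B`_k *: L k - (ev Q B`_k * e k) *: L i0)); last first.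
      by move=> k _; rewrite scalerBr scalerA.
    by rewrite sumrB scaler_suml addrA subrK.
  apply: hJD; first exact: exp.
  apply: lideal_sum => // k _; apply: hJZ; exact: he'.
set u1 := \sum_(k < n) ev 1 B`_k * e k.
have J1 := congr 1.
have u10 : u1 != 0.
  by apply/eqP => h0; apply: nP; apply: (lideal_all _ hJ); move: J1; rewrite -/u1 h0 scale0r subr0.
set w := \sum_(k < n) ev 'X B`_k * e k.
have JX := congr 'X.
set a := w * u1^-1.
have JXa : J ('X - a%:P).
  have -> : 'X - a%:P = ('X - w *: L i0) - a *: (1 - u1 *: L i0).
    rewrite scalerBr scalerA /a -mulrA mulVR // mulr1 -polyC1 scale_polyC mulr1.
    by rewrite opprB addrA subrK.
  by apply: JB => //; apply: hJZ.
have Jev : forall Q, J (Q - (ev Q a)%:P).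
  move=> Q; have [G hG] := evP Q a; rewrite {1}hG addrK.
  exact: lideal_smul.
have Jc : forall c, c != 0 -> J c%:P -> False.
  move=> c cn0 Jc; apply: nP; apply: (lideal_all _ hJ).
  by have := hJZ c^-1 _ Jc; rewrite (scale_polyC c^-1) mulVR // polyC1.
have vanish : forall G, J G -> ev G a = 0.
  move=> G JG; apply/eqP; apply: contraT => hne; exfalso; apply: (Jc _ hne).
  by have := JB _ _ JG (Jev G); rewrite subsub.
exists a; split; last split => //.
- by apply: Om_of => F hF; apply: vanish; apply: hOm.
- apply/eqP => h; apply: nP; by have := Jev P; rewrite h subr0.
Qed.

Lemma thmC (P : {poly R}) : forall (k : nat) (J : {poly R} -> Prop),
  lideal J -> (forall F, IS Om F -> J F) -> ~ J P ->
  (exists sq : seq 'I_n, (size sq <= k)%N /\ forall i, ~ J (L i) -> i \in sq) ->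
  exists a, Om a /\ (forall G, J G -> ev G a = 0) /\ ev P a != 0.
Proof.
elim => [|k IH] J hJ hOm nP [sq [ssq hsq]];
  (case: (classic (exists i, ~ J (L i) /\ ~ (exists G c, J G /\ P = G + c *: L i))) => [[i [ni nJ']]|hno];
  last by apply: caseB => // i hi; apply: NNPP => h; apply: hno; exists i).
  by move: ssq (hsq i ni); rewrite leqn0 => /nilP ->.
pose J' := fun Q => exists G c, J G /\ Q = G + c *: L i.
have [hJ0 hJD hJZ hJx] := hJ.
have JJ' : forall Q, J Q -> J' Q by move=> Q JQ; exists Q, 0; rewrite scale0r addr0.
have hJ' : lideal J'.
  split.
  - by apply: JJ'.
  - move=> p q [G1 [c1 [J1 ->]]] [G2 [c2 [J2 ->]]]; exists (G1 + G2), (c1 + c2).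
    by split; [apply: hJD | rewrite scalerDl addrACA].
  - move=> c p [G1 [c1 [J1 ->]]]; exists (c *: G1), (c * c1).
    by split; [apply: hJZ | rewrite scalerDr scalerA].
  - move=> p [G1 [c1 [J1 ->]]].
    have JL : J (mulxl (L i) - B`_i *: L i).
      apply: hOm; apply: IB_IOm; apply/IB_nth => j hj.
      rewrite evB evZ ev_mulxl !hL //.
      case: (eqVneq j i) => [->|ne].
        by rewrite rmorph1 mul1r d1 addr0 mulr1 subrr.
      by rewrite rmorph0 d0 mul0r addr0 mulr0 subrr.
    exists (mulxl G1 + s c1 *: (mulxl (L i) - B`_i *: L i)), (s c1 * B`_i + d c1).
    split; first by apply: hJD => //; [apply: hJx | apply: hJZ].
    have E : s c1 *: mulxl (L i) + d c1 *: L i =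
        s c1 *: (mulxl (L i) - B`_i *: L i) + (s c1 * B`_i + d c1) *: L i.
      by rewrite scalerBr scalerA scalerDl addrA subrK.
    rewrite mulxlD mulxlZ E; exact: addrA.
have iin : i \in sq := hsq i ni.
have [a [ha [hv hP]]] : exists a, Om a /\ (forall G, J' G -> ev G a = 0) /\ ev P a != 0.
  apply: (IH J') => //.
  - by move=> F hF; apply: JJ'; apply: hOm.
  - exists (filter (predC (pred1 i)) sq); split.
      rewrite size_filter -ltnS; apply: (leq_trans _ ssq).
      rewrite -(count_predC (pred1 i) sq) -addn1 addnC leq_add2r.
      by rewrite -has_count has_pred1.
    move=> j nj; rewrite mem_filter; apply/andP; split.
      apply/eqP => e; apply: nj; rewrite e; exists 0, 1; by rewrite scale1r add0r.
    by apply: hsq => Jj; apply: nj; apply: JJ'.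
exists a; split => //; split => // G JG; apply: hv; exact: JJ'.
Qed.

End ThmC.


Lemma ThmC_full (J : {poly R} -> Prop) : lideal J -> (forall F, IS Om F -> J F) ->
  forall P, ~ J P -> exists a, Om a /\ (forall G, J G -> ev G a = 0) /\ ev P a != 0.
Proof.
have [L hL] := Lfam; move=> hJ hOm P nP.
apply: (thmC _ hL P n J) => //.
by exists (enum 'I_n); split; [rewrite size_enum_ord | move=> i _; rewrite mem_enum].
Qed.

Lemma sumI (F G P : {poly R}) :
  (forall a, Om a -> ev F a = 0 -> ev G a = 0 -> ev P a = 0) ->
  exists U V, IS (ZOm s d Om F) U /\ IS (ZOm s d Om G) V /\ P = U + V.
Proof.
move=> hP.
pose J := fun Q => exists U V, IS (ZOm s d Om F) U /\ IS (ZOm s d Om G) V /\ Q = U + V.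
have [zF dF sF xF] := IS_lid (ZOm s d Om F).
have [zG dG sG xG] := IS_lid (ZOm s d Om G).
have hJ : lideal J.
  split.
  - by exists 0, 0; rewrite addr0.
  - move=> p q [U1 [V1 [u1 [v1 ->]]]] [U2 [V2 [u2 [v2 ->]]]].
    by exists (U1 + U2), (V1 + V2); rewrite addrACA; split; [apply: dF | split; [apply: dG|]].
  - move=> c p [U1 [V1 [u1 [v1 ->]]]].
    by exists (c *: U1), (c *: V1); rewrite scalerDr; split; [apply: sF | split; [apply: sG|]].
  - move=> p [U1 [V1 [u1 [v1 ->]]]].
    by exists (mulxl U1), (mulxl V1); rewrite mulxlD; split; [apply: xF | split; [apply: xG|]].
have hOm : forall Q, IS Om Q -> J Q.
  by move=> Q hQ; exists Q, 0; rewrite addr0; split => // a [ha _]; apply: hQ.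
case: (classic (J P)) => // nJ.
have [a [ha [hv hPa]]] := ThmC_full _ hJ hOm _ nJ.
have JF : J F by exists F, 0; rewrite addr0; split; [move=> a' [_ h] | split].
have JG : J G by exists 0, G; rewrite add0r; split; [|split; [move=> a' [_ h]|]].
by move: hPa; rewrite hP // ?eqxx //; [apply: hv | apply: hv].
Qed.

Lemma ZOm_sub H a : ZOm s d Om H a -> Om a. Proof. by case. Qed.

Lemma tri (F G : {poly R}) : (wtO s d Om (F + G) <= wtO s d Om F + wtO s d Om G)%N.
Proof.
rewrite /wtO Rk_Om.
have [rA [hrA mA]] := minpoly_ex _ (ZOm_sub F).
have [rC [hrC mC]] := minpoly_ex _ (ZOm_sub G).
have [rD [hrD mD]] := minpoly_ex _ (ZOm_sub (F + G)).
rewrite (Rk_eq _ _ mA) (Rk_eq _ _ mC) (Rk_eq _ _ mD).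
move: mA mC mD => [MA [mMA [iA [sA minA]]]] [MC [mMC [iC [sC minC]]]] [MD [mMD [iD [sD minD]]]].
have [MB [mMB [sMB JMB]]] := MB_ex.
set lA := mkseq (fun j => iter j mulxl MA) (n - rA).
set lC := mkseq (fun j => iter j mulxl MC) (n - rC).
have hf : forall (c : R) (u v : {poly R}), id (u - c *: v) = id u - c *: id v by [].
have := card_degs id hf n.+1 (lA ++ lC); rewrite size_cat !size_mkseq => h1.
apply: leq_trans h1.
apply: (degs_lb id n.+1 (lA ++ lC) rD); first by move: hrD; lia.
move=> j hj.
set w := iter j mulxl MD.
have [mw sw] := monic_iter j mMD.
have sw' : size w = (rD + j).+1 by rewrite sw sD addSn.
exists w; split; last by [].
have Dw : IS (ZOm s d Om (F + G)) w := lideal_iter _ _ _ (IS_lid _) iD.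
have [U [V [hU [hV e]]]] : exists U V, IS (ZOm s d Om F) U /\ IS (ZOm s d Om G) V /\ w = U + V.
  by apply: sumI => a ha hFa hGa; apply: Dw; split => //; rewrite evD hFa hGa addr0.
have [U' [sU' hU']] := Red (IS_lid Om) mMB sMB (IB_IOm JMB) U.
have ZA : forall H Q, IS Om Q -> IS (ZOm s d Om H) Q by move=> H Q hQ a [ha _]; apply: hQ.
have U'A : IS (ZOm s d Om F) U' by rewrite -(subsub _ U U'); apply: IS_B => //; apply: ZA.
have V'C : IS (ZOm s d Om G) (w - U').
  have -> : w - U' = V + (U - U') by rewrite e [U + V]addrC -addrA.
  by apply: IS_D => //; apply: ZA.
have swn : (size w <= n)%N by rewrite sw'; move: hj; lia.
have inA := KS_span _ _ _ mMA iA sA minA _ U'A sU'.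
have sV' : (size (w - U')%R <= n)%N by rewrite (leq_trans (size_polyD _ _)) // geq_max swn size_polyN.
have inC := KS_span _ _ _ mMC iC sC minC _ V'C sV'.
have -> : w = U' + (w - U') by rewrite addrC subrK.
by apply: inspanD; [apply: inspan_catl | apply: inspan_catr].
Qed.

Lemma ZOm0 : ZOm s d Om 0 = Om.
Proof.
apply: functional_extensionality => a; apply: propositional_extensionality.
by split => [[]//|h]; split => //; rewrite ev0.
Qed.

Lemma wtO_zero {F : {poly R}} : (size F <= n)%N -> (wtO s d Om F = 0%N <-> F = 0).
Proof.
move=> hF; split; last by move=> ->; rewrite /wtO ZOm0 Rk_Om subnn.
move=> h; apply/eqP; apply: contraT => F0.
have [r [hr m]] := minpoly_ex _ (ZOm_sub F).
move: h; rewrite /wtO Rk_Om (Rk_eq _ _ m).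
move: m => [M [_ [_ [_ minF]]]].
have := minF F F0 (fun a ha => proj2 ha).
by move: hF; lia.
Qed.

Lemma wtOZ (a : R) (F : {poly R}) : a != 0 -> wtO s d Om (a *: F) = wtO s d Om F.
Proof.
move=> a0; rewrite /wtO.
have -> : ZOm s d Om (a *: F) = ZOm s d Om F; last by [].
apply: functional_extensionality => b; apply: propositional_extensionality.
split => -[hb h]; split => //; last by rewrite evZ h mulr0.
by move: h; rewrite evZ => /mulR_eq0 [h|//]; move: a0; rewrite h eqxx.
Qed.

Lemma EB_iff {F : {poly R}} : (size F <= n)%N -> (EB s d B F = 0 <-> F = 0).
Proof.
move=> hF; split; last by move=> ->; apply/rowP => k; rewrite !mxE ev0.
move=> h; apply: (IB_small _ hF); apply/IB_nth => k hk.
by have := congr1 (fun M : 'rV[R]_n => M 0 (Ordinal hk)) h; rewrite !mxE.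
Qed.

Lemma EBD (F G : {poly R}) : EB s d B (F + G) = EB s d B F + EB s d B G.
Proof. by apply/rowP => k; rewrite !mxE evD. Qed.
Lemma EBZ (a : R) (F : {poly R}) : EB s d B (a *: F) = a *: EB s d B F.
Proof. by apply/rowP => k; rewrite !mxE evZ. Qed.

Lemma interpP (f : 'rV[R]_n) : (size (interpB s d B f) <= n)%N /\ EB s d B (interpB s d B f) = f.
Proof.
rewrite /interpB; apply: (epsilon_spec (inhabits 0) (fun F : {poly R} => (size F <= n)%N /\ EB s d B F = f)).
pose v := fun j : nat => oapp (fun k : 'I_n => f 0 k) 0 (insub j).
have [P [sP hP]] := interp_ex v.
exists P; split => //; apply/rowP => k; rewrite mxE hP // /v valK.
by [].
Qed.

Lemma interp_uniq (f : 'rV[R]_n) {F : {poly R}} : (size F <= n)%N -> EB s d B F = f -> interpB s d B f = F.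
Proof.
move=> sF eF; have [s1 e1] := interpP f.
apply/eqP; rewrite -subr_eq0; apply/eqP; apply/EB_iff.
  by rewrite (leq_trans (size_polyD _ _)) // geq_max s1 size_polyN.
by rewrite -scaleN1r EBD EBZ scaleN1r e1 eF subrr.
Qed.

Lemma wtB0 (f : 'rV[R]_n) : wtB s d Om B f = 0%N <-> f = 0.
Proof.
have [s1 e1] := interpP f; rewrite /wtB (wtO_zero s1); split.
  by move=> h; rewrite -e1 h; apply/rowP => k; rewrite !mxE ev0.
by move=> ->; apply: interp_uniq; [rewrite size_poly0 | apply/rowP => k; rewrite !mxE ev0].
Qed.

Lemma wtB_tri (f g : 'rV[R]_n) : (wtB s d Om B (f + g) <= wtB s d Om B f + wtB s d Om B g)%N.
Proof.
have [s1 e1] := interpP f; have [s2 e2] := interpP g.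
rewrite /wtB (interp_uniq _ (F := interpB s d B f + interpB s d B g)); first exact: tri.
  by rewrite (leq_trans (size_polyD _ _)) // geq_max s1 s2.
by rewrite EBD e1 e2.
Qed.

Lemma wtB_Z (a : R) (f : 'rV[R]_n) : a != 0 -> wtB s d Om B (a *: f) = wtB s d Om B f.
Proof.
move=> a0; have [s1 e1] := interpP f.
rewrite /wtB (interp_uniq _ (F := a *: interpB s d B f)); first exact: wtOZ.
  by rewrite (leq_trans (size_scale_leq _ _)).
by rewrite EBZ e1.
Qed.

Lemma main_sec :
  let n := size B in
  (forall F G : {poly R}, (size F <= n)%N -> (size G <= n)%N ->
     ((wtO s d Om F = 0%N <-> EB s d B F = 0) /\ (EB s d B F = 0 <-> F = 0)) /\
     (wtO s d Om (F + G) <= wtO s d Om F + wtO s d Om G)%N /\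
     (forall a : R, a != 0 -> wtO s d Om (a *: F) = wtO s d Om F)) /\
  (forall f g : 'rV[R]_n,
     ((wtB s d Om B f = 0%N <-> f = 0) /\
      (wtB s d Om B (f + g) <= wtB s d Om B f + wtB s d Om B g)%N /\
      (forall a : R, a != 0 -> wtB s d Om B (a *: f) = wtB s d Om B f))) /\
  (forall f g h : 'rV[R]_n,
     (dB s d Om B f g = 0%N <-> f = g) /\
     dB s d Om B f g = dB s d Om B g f /\
     (dB s d Om B f h <= dB s d Om B f g + dB s d Om B g h)%N).
Proof.
move=> /=; split; [|split].
- move=> F G hF hG; split; [|split; [exact: tri | by move=> a; apply: wtOZ]].
  have h1 := wtO_zero hF; have h2 := EB_iff hF.
  split => //; split => [/h1/h2|/h2/h1] //.
- move=> f g; split; [exact: wtB0 | split; [exact: wtB_tri | by move=> a; apply: wtB_Z]].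
- move=> f g h; rewrite /dB; split; [|split].
  + rewrite wtB0; split => [hh|->]; last by rewrite subrr.
    by apply/eqP; rewrite -subr_eq0; apply/eqP.
  + by rewrite -opprB -scaleN1r wtB_Z // oppr_eq0 oner_eq0.
  + by have := wtB_tri (f - g) (g - h); rewrite addrA subrK.
Qed.

End Skew.

Theorem mainTheorem1 (R : unitRingType)
  (Hdiv : forall x : R, x != 0 -> x \is a GRing.unit)
  (s : {rmorphism R -> R}) (d : R -> R)
  (d_add : forall a b : R, d (a + b) = d a + d b)
  (d_mul : forall a b : R, d (a * b) = s a * d b + d a * b)
  (Om : R -> Prop) (B : seq R)
  (HOm : Pclosed s d Om) (HB : Pbasis s d Om B) :
  let n := size B in
 
  (forall F G : {poly R}, (size F <= n)%N -> (size G <= n)%N ->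
     ((wtO s d Om F = 0%N <-> EB s d B F = 0) /\ (EB s d B F = 0 <-> F = 0)) /\
     (wtO s d Om (F + G) <= wtO s d Om F + wtO s d Om G)%N /\
     (forall a : R, a != 0 -> wtO s d Om (a *: F) = wtO s d Om F)) /\
  (forall f g : 'rV[R]_n,
     ((wtB s d Om B f = 0%N <-> f = 0) /\
      (wtB s d Om B (f + g) <= wtB s d Om B f + wtB s d Om B g)%N /\
      (forall a : R, a != 0 -> wtB s d Om B (a *: f) = wtB s d Om B f))) /\
  (forall f g h : 'rV[R]_n,
     (dB s d Om B f g = 0%N <-> f = g) /\
     dB s d Om B f g = dB s d Om B g f /\
     (dB s d Om B f h <= dB s d Om B f g + dB s d Om B g h)%N).
Proof. exact: (@main_sec R Hdiv s d d_add d_mul Om B HOm HB). Qed.
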